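(* For $m,n\in \mathbb{Z}_{>1}$, we have \begin{align*} \zeta(m)\zeta(n)-\zeta(m+n)=P(m,n)+P(n,m), \end{align*} where $P(m,n):=\sum^{m-1}_{i=0}(-1)^{i}\binom{n+i-1}{i}\zeta(n+i)\zeta_{\sqcup\!\sqcup}(m-i)+(-1)^{m}\sum^{n-1}_{j=0}\binom{m+j-1}{j}\bigl\{\zeta(m+j)\zeta_{\sqcup\!\sqcup}(n-j)-\zeta^{\star}(n-j,m+j)\bigr\}$, and \begin{align*} \zeta(m, n)=&\sum^{m-1}_{i=0}(-1)^{i}\binom{n+i-1}{i}\Bigl\{\zeta_{*}(n+i, m-i)+\zeta(m-i, n+i)+\zeta(m+n)\Bigr\}\\ &+(-1)^{m}\sum^{n-1}_{j=0}\binom{m+j-1}{j}\zeta_{*}(m+j, n-j). \end{align*}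
   Context: For $n\in\mathbb{Z}_{>0}$, $m\in\mathbb{Z}_{>1}$: $\zeta(m)=\sum_{k\ge1}k^{-m}$, $\zeta(n,m)=\sum_{0<k_1<k_2}k_1^{-n}k_2^{-m}$, $\zeta^\star(n,m)=\sum_{0<k_1\le k_2}k_1^{-n}k_2^{-m}=\zeta(n,m)+\zeta(m+n)$. Shuffle regularized values: for $m\in\mathbb{Z}_{>0}$, as $\epsilon\to0$, $\sum_{k>0}(1-\epsilon)^k/k^m\sim c_0+c_1(-\log\epsilon)$ and $\zeta_{\sqcup\!\sqcup}(m):=c_0+c_1T\in\mathbb{R}[T]$; so $\zeta_{\sqcup\!\sqcup}(1)=T$, $\zeta_{\sqcup\!\sqcup}(m)=\zeta(m)$ for $m>1$. Harmonic regularized values: for $m,n\in\mathbb{Z}_{>0}$, as $N\to\infty$, $\sum_{0<k_1<k_2<N}k_1^{-m}k_2^{-n}\sim b_0+b_1(\log N+\gamma)+b_2(\log N+\gamma)^2$ ($\gamma$ Euler's constant) and $\zeta_{*}(m,n):=b_0+b_1T+b_2T^2\in\mathbb{R}[T]$; $\zeta_*(m,n)=\zeta(m,n)$ when $n>1$. The identities are equalities in $\mathbb{R}[T]$. *)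

(* Defs.v *)
From HB Require Import structures.
From mathcomp Require Import all_boot all_order all_algebra.
From mathcomp Require Import all_classical all_reals all_analysis.
Set Implicit Arguments. Unset Strict Implicit. Unset Printing Implicit Defensive.
Import Order.TTheory GRing.Theory Num.Theory.
Import numFieldNormedType.Exports.
Local Open Scope classical_set_scope.
Local Open Scope ring_scope.

Section MZV.
Variable R : realType.

Definition zeta (m : nat) : R :=
  limn (fun N => \sum_(1 <= k < N) (k%:R ^- m : R)).

Definition zeta2 (n m : nat) : R :=
  limn (fun N => \sum_(1 <= k2 < N) \sum_(1 <= k1 < k2)
                   (k1%:R ^- n * k2%:R ^- m : R)).

Definition zetastar (n m : nat) : R := zeta2 n m + zeta (m + n).

Definition euler_gamma : R :=
  limn (fun N => \sum_(1 <= k < N.+1) (k%:R^-1 : R) - ln (N%:R)).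

(* Shuffle regularization: p = c0 + c1 T (size p <= 2) such that
   sum_{k>0} (1-eps)^k / k^m - (c0 + c1 (-log eps)) -> 0 as eps -> 0+. *)
Definition is_sh_reg (m : nat) (p : {poly R}) : Prop :=
  (size p <= 2)%N /\
  (fun eps : R => limn (fun N => \sum_(1 <= k < N) ((1 - eps) ^+ k / k%:R ^+ m))
                  - p.[- ln eps]) @ (0 : R)^'+ --> (0 : R).

Definition zeta_sh (m : nat) : {poly R} := xget 0 [set p | is_sh_reg m p].

(* Harmonic regularization: p = b0 + b1 T + b2 T^2 (size p <= 3) such that
   sum_{0<k1<k2<N} k1^{-m} k2^{-n} - p(log N + gamma) -> 0 as N -> oo. *)
Definition is_st_reg (m n : nat) (p : {poly R}) : Prop :=
  (size p <= 3)%N /\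
  (fun N : nat => \sum_(1 <= k2 < N) \sum_(1 <= k1 < k2)
                     (k1%:R ^- m * k2%:R ^- n : R)
                  - p.[ln (N%:R) + euler_gamma]) @ \oo --> (0 : R).

Definition zeta_st (m n : nat) : {poly R} := xget 0 [set p | is_st_reg m n p].

Definition Pmn (m n : nat) : {poly R} :=
  \sum_(0 <= i < m) (((-1) ^+ i * ('C(n + i - 1, i))%:R * zeta (n + i)) *: zeta_sh (m - i))
  + (-1) ^+ m *: \sum_(0 <= j < n) (('C(m + j - 1, j))%:R *:
        (zeta (m + j) *: zeta_sh (n - j) - (zetastar (n - j) (m + j))%:P)).

End MZV.

(* Main.v *)
Require Import Defs.
From HB Require Import structures.
From mathcomp Require Import all_boot all_order all_algebra.
From mathcomp Require Import all_classical all_reals all_analysis.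
From mathcomp Require Import ring lra zify.
Import Order.TTheory GRing.Theory Num.Theory.
Import numFieldNormedType.Exports.
Local Open Scope ring_scope.

Module Helpers.
Set Implicit Arguments. Unset Strict Implicit. Unset Printing Implicit Defensive.
Section PF.
Variable F : fieldType.
Variables (D : F).

Definition HH (c U : F) (a b : nat) : F :=
  \sum_(i < a) c ^+ i * ('C(b + i - 1, i))%:R * U ^+ (a - i) * D ^+ (b + i).

Lemma HH_rec c U a b :
  HH c U a.+1 b.+1 = D * (HH c U a.+1 b + c * HH c U a b.+1).
Proof.
rewrite /HH big_ord_recl [in RHS]big_ord_recl /= mulrDr mulrDr.
rewrite -addrA; congr (_ + _).
  by rewrite !addn0 !bin0 exprS; ring.
rewrite !mulr_sumr -big_split /=; apply: eq_bigr => i _.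
rewrite /bump /= ?add1n.
have -> : (b.+1 + i.+1 - 1 = (b + i).+1)%N by rewrite addnS addSn subn1.
have -> : (b + i.+1 - 1 = b + i)%N by rewrite addnS subn1.
have -> : (b.+1 + i - 1 = b + i)%N by rewrite addSn subn1.
have -> : (b.+1 + i.+1 = (b + i).+2)%N by rewrite addnS addSn.
have -> : (b + i.+1 = (b + i).+1)%N by rewrite addnS.
have -> : (b.+1 + i = (b + i).+1)%N by rewrite addSn.
rewrite binS natrD subSS !exprS; ring.
Qed.

Lemma HH_0 c U a : HH c U a.+1 0 = U ^+ a.+1.
Proof.
rewrite /HH big_ord_recl /= big1 ?addr0.
  by rewrite !expr0 bin0 !mul1r mulr1 subn0.
move=> i _; rewrite /bump /= add0n add1n subn1 /= bin_small // mulr0n.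
by rewrite mulr0 !mul0r.
Qed.

Lemma HH_a0 c U b : HH c U 0 b = 0.
Proof. by rewrite /HH big_ord0. Qed.

Variables (U Y : F).
Hypothesis hUY : U - Y = D^-1 * U * Y.
Hypothesis hD : D != 0.

Definition PFR (m n : nat) := HH (-1) U m n + (-1) ^+ m * HH 1 Y n m.

Lemma PF m n : (0 < m + n)%N -> U ^+ m * Y ^+ n = PFR m n.
Proof.
rewrite /PFR; elim: m n => [|m IHm] n.
  case: n => [//|n] _; by rewrite HH_a0 HH_0 expr0 !mul1r add0r.
elim: n => [|n IHn] _.
  by rewrite HH_0 HH_a0 expr0 mulr0 addr0 mulr1.
rewrite !HH_rec.
have e1 := IHn (isT : (0 < m.+1 + n)%N).
have e2 : U ^+ m * Y ^+ n.+1 = _ := IHm n.+1 ltac:(by rewrite addnS).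
have key : U ^+ m.+1 * Y ^+ n.+1 = D * (U ^+ m.+1 * Y ^+ n - U ^+ m * Y ^+ n.+1).
  rewrite !exprS.
  have -> : U * U ^+ m * Y ^+ n - U ^+ m * (Y * Y ^+ n) = U ^+ m * Y ^+ n * (U - Y) by ring.
  rewrite hUY; have hDD : D * D^-1 = 1 := divff hD.
  transitivity ((D * D^-1) * (U * U ^+ m * (Y * Y ^+ n))); first by rewrite hDD mul1r.
  ring.
rewrite key e1 e2 !exprS. ring.
Qed.

End PF.

Section An.
Variable R : realType.
Local Open Scope classical_set_scope.

Definition SS (N a b : nat) : R :=
  \sum_(1 <= l < N) \sum_(1 <= k < l) (k%:R ^- a * l%:R ^- b).
Definition ZZ (a N : nat) : R := \sum_(1 <= k < N) (k%:R ^- a).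

Lemma mono_cvg (u : nat -> R) B : (forall n, u n <= u n.+1) -> (forall n, u n <= B) -> u @ \oo --> limn u.
Proof.
move=> ui ub; apply: nondecreasing_is_cvgn; first exact/nondecreasing_seqP.
by exists B => _ [n _ <-].
Qed.

Lemma sum_mono_range (F : nat -> R) a b : (forall i, (1 <= i)%N -> 0 <= F i) -> (a <= b)%N ->
  \sum_(1 <= i < a) F i <= \sum_(1 <= i < b) F i.
Proof.
move=> F0 ab; case: (leqP a 1) => a1.
  rewrite big_geq // big_nat_cond sumr_ge0 // => i /andP[/andP[i1 _] _]; exact: F0.
rewrite (big_cat_nat (ltnW a1) ab) /= lerDl big_nat_cond sumr_ge0 // => i /andP[/andP[ai _] _].
by apply: F0; apply: leq_trans (ltnW a1) ai.
Qed.

Lemma sum_le_range (F G : nat -> R) a b : (forall i, (1 <= i)%N -> 0 <= G i) ->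
  (forall i, (1 <= i)%N -> F i <= G i) -> (a <= b)%N ->
  \sum_(1 <= i < a) F i <= \sum_(1 <= i < b) G i.
Proof.
move=> G0 FG ab; apply: le_trans (sum_mono_range G0 ab).
by apply: ler_sum_nat => i /andP[i1 _]; apply: FG.
Qed.

Lemma ip_ge0 k a : 0 <= k%:R ^- a :> R.
Proof. by rewrite invr_ge0 exprn_ge0. Qed.

Lemma ip_le (k a b : nat) : (1 <= k)%N -> (a <= b)%N -> k%:R ^- b <= k%:R ^- a :> R.
Proof.
move=> k1 ab; rewrite -!exprVn; apply: ler_wiXn2l => //;
  by rewrite ?invr_ge0 ?invf_le1 ?ler1n ?ltr0n.
Qed.

Lemma ip_le1 (k a : nat) : (1 <= k)%N -> k%:R ^- a <= 1 :> R.
Proof. by move=> k1; have := ip_le k1 (leq0n a); rewrite expr0 invr1. Qed.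

Lemma zz2_bound N : ZZ 2 N.+2 <= 2 - N.+1%:R^-1.
Proof.
elim: N => [|N IH].
  by rewrite /ZZ big_nat1 expr2 mul1r invr1; lra.
rewrite /ZZ big_nat_recr //= -/(ZZ 2 N.+2).
have -> : N.+2%:R ^- 2 = N.+2%:R^-1 * N.+2%:R^-1 :> R by rewrite -exprVn expr2.
have h1 : 0 < N.+1%:R :> R by rewrite ltr0n.
have h2 : N.+1%:R < N.+2%:R :> R by rewrite ltr_nat.
have : N.+2%:R^-1 * N.+2%:R^-1 <= N.+1%:R^-1 - N.+2%:R^-1 :> R.
  have e : N.+1%:R^-1 - N.+2%:R^-1 = (N.+1%:R * N.+2%:R)^-1 :> R.
    rewrite -[N.+2%:R]natr1; field.
    by apply/andP; split; rewrite gt_eqF // ?ltr0n // ltr_wpDr.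
  rewrite e -invfM lef_pV2 ?posrE ?mulr_gt0 ?ltr0n //.
  by rewrite ler_pM2r ?ltr0n // ler_nat.
move=> h; set t := N.+2%:R^-1 / N.+2%:R in h *.
set u := N.+2%:R^-1 in h *; set v := N.+1%:R^-1 in h IH *.
lra.
Qed.

Lemma ZZ_le2 a N : (2 <= a)%N -> ZZ a N <= 2.
Proof.
move=> a2; apply: (@le_trans _ _ (ZZ 2 N)).
  by apply: ler_sum_nat => k /andP[k1 _]; apply: ip_le.
case: N => [|[|N]]; first by rewrite /ZZ big_geq.
  by rewrite /ZZ big_geq.
apply: le_trans (zz2_bound N) _; rewrite lerBlDr lerDl invr_ge0 //.
Qed.

Lemma ZZ_mono a N : ZZ a N <= ZZ a N.+1.
Proof. by apply: sum_mono_range => // i _; exact: ip_ge0. Qed.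

Lemma ZZ_cvg a : (2 <= a)%N -> ZZ a @ \oo --> zeta R a.
Proof. by move=> a2; apply: (@mono_cvg _ 2) => n; [exact: ZZ_mono | exact: ZZ_le2]. Qed.

Lemma ipD (k a b : nat) : k%:R ^- (a + b) = k%:R ^- a * k%:R ^- b :> R.
Proof. by rewrite exprD invfM. Qed.

Lemma prod_fin a b N : ZZ a N * ZZ b N = SS N a b + SS N b a + ZZ (a + b) N.
Proof.
case: N => [|N]; first by rewrite /ZZ /SS !big_geq // mul0r !addr0.
elim: N => [|N IH]; first by rewrite /ZZ /SS !big_geq // mul0r !addr0.
have eZ c : ZZ c N.+2 = ZZ c N.+1 + N.+1%:R ^- c by rewrite /ZZ big_nat_recr.
have eS c d : SS N.+2 c d = SS N.+1 c d + ZZ c N.+1 * N.+1%:R ^- d.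
  by rewrite /SS big_nat_recr //= mulr_suml.
rewrite !eZ !eS mulrDl !mulrDr IH ipD; ring.
Qed.

Lemma SS_mono N a b : SS N a b <= SS N.+1 a b.
Proof.
apply: sum_mono_range => // l _; apply: sumr_ge0 => k _.
by rewrite mulr_ge0 // ip_ge0.
Qed.

Lemma ipinv_le (k l : nat) : (1 <= k)%N -> (k <= l)%N -> l%:R^-1 <= k%:R^-1 :> R.
Proof.
move=> k1 kl; rewrite lef_pV2 ?posrE ?ltr0n ?ler_nat //.
exact: leq_trans k1 kl.
Qed.

Lemma term_le22 (k l a b : nat) : (1 <= k)%N -> (k <= l)%N -> (1 <= a)%N -> (2 <= b)%N ->
  (4 <= a + b)%N -> k%:R ^- a * l%:R ^- b <= k%:R ^- 2 * l%:R ^- 2 :> R.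
Proof.
move=> k1 kl a1 b2 ab4; have l1 : (1 <= l)%N := leq_trans k1 kl.
case: (leqP 2 a) => a2.
  by apply: ler_pM; rewrite ?ip_ge0 // ip_le.
have a1' : a = 1%N by apply/eqP; rewrite eqn_leq a1 -ltnS a2.
subst a; have b3 : (3 <= b)%N by rewrite -(leq_add2l 1).
apply: (@le_trans _ _ (k%:R ^- 1 * l%:R ^- 3)).
  by apply: ler_pM; rewrite ?ip_ge0 // ip_le.
have -> : l%:R ^- 3 = l%:R^-1 * l%:R ^- 2 :> R by rewrite -(ipD l 1 2) ?expr1.
have -> : k%:R ^- 2 = k%:R^-1 * k%:R ^- 1 :> R by rewrite -(ipD k 1 1) ?expr1.
rewrite !expr1 mulrA; apply: ler_pM; rewrite ?mulr_ge0 ?invr_ge0 ?ip_ge0 //.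
by apply: ler_pM; rewrite ?invr_ge0 // ipinv_le.
Qed.

Lemma SS_le4 N a b : (1 <= a)%N -> (2 <= b)%N -> (4 <= a + b)%N -> SS N a b <= 4.
Proof.
move=> a1 b2 ab4; apply: (@le_trans _ _ (SS N 2 2)).
  apply: ler_sum_nat => l /andP[l1 _]; apply: ler_sum_nat => k /andP[k1 kl].
  by apply: term_le22 => //; apply: ltnW.
apply: (@le_trans _ _ (ZZ 2 N * ZZ 2 N)).
  rewrite prod_fin -addrA lerDl addr_ge0 //.
    by rewrite sumr_ge0 // => l _; rewrite sumr_ge0 // => k _; rewrite mulr_ge0 // ip_ge0.
  by rewrite sumr_ge0 // => k _; rewrite ip_ge0.
have h := ZZ_le2 N (leqnn 2); have h0 : 0 <= ZZ 2 N by rewrite sumr_ge0 // => k _; rewrite ip_ge0.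
nra.
Qed.

Lemma SS_cvg a b : (1 <= a)%N -> (2 <= b)%N -> (4 <= a + b)%N ->
  (fun N => SS N a b) @ \oo --> zeta2 R a b.
Proof.
move=> a1 b2 ab4; apply: (@mono_cvg _ 4) => N; [exact: SS_mono | exact: SS_le4].
Qed.

Lemma prod_zeta a b : (2 <= a)%N -> (2 <= b)%N ->
  zeta R a * zeta R b = zeta2 R a b + zeta2 R b a + zeta R (a + b).
Proof.
move=> a2 b2.
have h1 : (fun N => ZZ a N * ZZ b N) @ \oo --> zeta R a * zeta R b.
  by apply: cvgM; apply: ZZ_cvg.
have h2 : (fun N => SS N a b + SS N b a + ZZ (a + b) N) @ \oo -->
    zeta2 R a b + zeta2 R b a + zeta R (a + b).
  apply: cvgD; first apply: cvgD.
  - by apply: SS_cvg => //; [exact: ltnW | exact: (leq_add a2 b2)].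
  - by apply: SS_cvg => //; [exact: ltnW | rewrite addnC; exact: (leq_add a2 b2)].
  - by apply: ZZ_cvg; apply: leq_trans a2 (leq_addr _ _).
have e : (fun N => ZZ a N * ZZ b N) = (fun N => SS N a b + SS N b a + ZZ (a + b) N).
  by apply: funext => N; exact: prod_fin.
rewrite e in h1; exact: (cvg_unique _ h1 h2).
Qed.
Definition TT (N a b : nat) : R :=
  \sum_(1 <= l < N) \sum_(1 <= k < l) (k%:R ^- a * (l - k)%:R ^- b).
Definition SSp (N a b : nat) : R :=
  \sum_(1 <= l < N) \sum_(1 <= k < l) ((l - k)%:R ^- a * l%:R ^- b).

Lemma term_PF (k l m n : nat) : (0 < k)%N -> (k < l)%N -> (0 < m + n)%N ->
  k%:R ^- m * l%:R ^- n =
  \sum_(i < m) ((-1) ^+ i * ('C(n + i - 1, i))%:R) * (k%:R ^- (m - i) * (l - k)%:R ^- (n + i))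
  + (-1) ^+ m * \sum_(j < n) ('C(m + j - 1, j))%:R * ((l - k)%:R ^- (m + j) * l%:R ^- (n - j)) :> R.
Proof.
move=> k0 kl mn.
have hk : k%:R != 0 :> R by rewrite pnatr_eq0 -lt0n.
have hl : l%:R != 0 :> R by rewrite pnatr_eq0 -lt0n (ltn_trans k0 kl).
have hd : (l - k)%:R != 0 :> R by rewrite pnatr_eq0 -lt0n subn_gt0.
have := @PF R ((l - k)%:R^-1) (k%:R^-1) (l%:R^-1) _ _ m n mn.
rewrite !exprVn => ->; last by rewrite invr_eq0.
  rewrite /PFR /HH; congr (_ + _ * _).
    by apply: eq_bigr => i _; rewrite !exprVn mulrA.
  by apply: eq_bigr => i _; rewrite !exprVn expr1n mul1r; ring.
rewrite invrK natrB ?(ltnW kl) //; field.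

by rewrite hk hl.
Qed.

Lemma sum_id (N m n : nat) : (0 < m + n)%N ->
  SS N m n = \sum_(i < m) ((-1) ^+ i * ('C(n + i - 1, i))%:R) * TT N (m - i) (n + i)
   + (-1) ^+ m * \sum_(j < n) ('C(m + j - 1, j))%:R * SSp N (m + j) (n - j).
Proof.
move=> mn; rewrite /SS /TT /SSp.
under eq_bigr => l _ do under eq_big_nat => k /andP[k0 kl] do rewrite (term_PF k0 kl mn).
under eq_bigr => l _ do rewrite big_split /=.
rewrite big_split /=; congr (_ + _).
  under eq_bigr => l _ do rewrite exchange_big /=.
  rewrite exchange_big /=; apply: eq_bigr => i _; rewrite mulr_sumr; apply: eq_bigr => l _.
  by rewrite mulr_sumr.
under eq_bigr => l _ do rewrite -mulr_sumr.
rewrite -mulr_sumr; congr (_ * _).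
under [in LHS]eq_bigr => l _ do rewrite exchange_big /=.
rewrite exchange_big /=; apply: eq_bigr => i _; rewrite mulr_sumr; apply: eq_bigr => l _.
by rewrite mulr_sumr.
Qed.

Lemma le_lim_mono (u : nat -> R) L n : (forall k, u k <= u k.+1) -> u @ \oo --> L -> u n <= L.
Proof.
move=> ui uL; have nd : nondecreasing_seq u by exact/nondecreasing_seqP.
apply: (cvgr_to_ge uL); near=> N; apply: nd; near: N; exact: nbhs_infty_ge.
Unshelve. all: by end_near.
Qed.

Definition Tri (f : nat -> nat -> R) N := \sum_(1 <= l < N) \sum_(1 <= k < l) f k (l - k)%N.
Definition Sq (f : nat -> nat -> R) M := \sum_(1 <= k < M) \sum_(1 <= d < M) f k d.

Lemma Tri_alt f N : Tri f N = \sum_(1 <= k < N) \sum_(1 <= d < N - k) f k d.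
Proof.
elim: N => [|N IH]; first by rewrite /Tri !big_geq.
case: N IH => [|N] IH; first by rewrite /Tri !big_geq.
rewrite /Tri big_nat_recr //= -/(Tri f N.+1) IH.
rewrite [in RHS]big_nat_recr //=. rewrite subSnn [X in _ = _ + X]big_geq // addr0 -big_split /=.
apply: eq_big_nat => k /andP[k1 kN].
by rewrite (subSn (ltnW kN)) big_nat_recr // subn_gt0.
Qed.

Section TriS.
Variable f : nat -> nat -> R.
Hypothesis f0 : forall k d, (1 <= k)%N -> (1 <= d)%N -> 0 <= f k d.

Lemma inner0 k M : (1 <= k)%N -> 0 <= \sum_(1 <= d < M) f k d.
Proof. by move=> k1; rewrite big_nat_cond sumr_ge0 // => d /andP[/andP[d1 _] _]; apply: f0. Qed.

Lemma Tri_le_Sq N : Tri f N <= Sq f N.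
Proof.
rewrite Tri_alt; apply: ler_sum_nat => k /andP[k1 _].
by apply: sum_mono_range; [move=> d d1; apply: f0 | exact: leq_subr].
Qed.

Lemma Sq_le_Tri M : Sq f M <= Tri f (M + M).
Proof.
rewrite Tri_alt; apply: (@le_trans _ _ (\sum_(1 <= k < M) \sum_(1 <= d < M + M - k) f k d)).
  apply: ler_sum_nat => k /andP[k1 kM].
  apply: sum_mono_range; [move=> d d1; apply: f0 => // | ].
  by rewrite -addnBA ?leq_addr // ltnW.
by apply: sum_mono_range; [move=> k k1; apply: inner0 | exact: leq_addr].
Qed.

Lemma Tri_mono N : Tri f N <= Tri f N.+1.
Proof.
apply: sum_mono_range => // l l1; rewrite big_nat_cond sumr_ge0 // => k /andP[/andP[k1 kl] _].
by apply: f0; rewrite // subn_gt0.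
Qed.

Lemma Sq_mono M : Sq f M <= Sq f M.+1.
Proof.
apply: sum_le_range => // k k1; first exact: inner0.
by apply: sum_mono_range => // d d1; apply: f0.
Qed.

Lemma Tri_lim (L : R) : Sq f @ \oo --> L -> Tri f @ \oo --> L.
Proof.
move=> SqL; have SL M : Sq f M <= L by exact: (@le_lim_mono (Sq f) L M Sq_mono SqL).
have TL N : Tri f N <= L by apply: le_trans (Tri_le_Sq N) (SL N).
have Tc := mono_cvg Tri_mono TL.
have L1 : limn (Tri f) <= L by apply: (cvgr_to_le Tc); near=> N; exact: TL.
have L2 : L <= limn (Tri f).
  apply: (cvgr_to_le SqL); near=> M; apply: le_trans (Sq_le_Tri M) _.
  exact: (@le_lim_mono (Tri f) _ _ Tri_mono Tc).
by have -> : L = limn (Tri f) by apply/eqP; rewrite eq_le L1 L2.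
Unshelve. all: by end_near.
Qed.
End TriS.

Lemma TT_cvg a b : (2 <= a)%N -> (2 <= b)%N ->
  (fun N => TT N a b) @ \oo --> zeta R a * zeta R b.
Proof.
move=> a2 b2.
have f0 : forall k d, (1 <= k)%N -> (1 <= d)%N -> 0 <= (fun k d => k%:R ^- a * d%:R ^- b : R) k d.
  by move=> k d _ _; rewrite mulr_ge0 ?ip_ge0.
have := Tri_lim f0 (L := zeta R a * zeta R b).
rewrite /Tri /TT; apply.
have e : Sq (fun k d => k%:R ^- a * d%:R ^- b) = fun M => ZZ a M * ZZ b M.
  apply: funext => M; rewrite /Sq /ZZ mulr_suml; apply: eq_bigr => k _.
  by rewrite mulr_sumr.
by rewrite e; apply: cvgM; apply: ZZ_cvg.
Qed.

Lemma SSp_SS N a b : SSp N a b = SS N a b.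
Proof.
apply: eq_bigr => l _; rewrite [RHS]big_nat_rev; apply: eq_big_nat => k _.
by rewrite add1n subSS.
Qed.

Definition gg s k d : R := d%:R ^- s * (k%:R^-1 - (k + d)%:R^-1).

Lemma D_is_Tri N s : TT N 1 s - SSp N s 1 = Tri (gg s) N.
Proof.
rewrite /TT /SSp /Tri -sumrB; apply: eq_big_nat => l _.
rewrite -sumrB; apply: eq_big_nat => k /andP[_ kl].
by rewrite /gg subnKC ?(ltnW kl) // !expr1; ring.
Qed.

Lemma tele_harm F a d : \sum_(a <= k < a + d) F k + F (a + d)%N =
  F a + \sum_(a.+1 <= k < (a + d).+1) F k :> R.
Proof.
by rewrite -big_nat_recr ?leq_addr // big_ltn // ltnS leq_addr.
Qed.

Lemma telescope M d : \sum_(1 <= k < M.+1) (k%:R^-1 - (k + d)%:R^-1) =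
  \sum_(1 <= k < d.+1) k%:R^-1 - \sum_(M.+1 <= k < M.+1 + d) k%:R^-1 :> R.
Proof.
elim: M => [|M IH]; first by rewrite big_geq // add1n subrr.
rewrite big_nat_recr //= IH.
have := tele_harm (fun k => k%:R^-1 : R) M.+1 d.
rewrite -addSn => e.
have e2 : \sum_(M.+2 <= k < M.+2 + d) k%:R^-1 =
   \sum_(M.+1 <= k < M.+1 + d) k%:R^-1 + (M.+1 + d)%:R^-1 - M.+1%:R^-1 :> R.
  by rewrite e; ring.
by rewrite e2; ring.
Qed.

Definition EE s M : R := \sum_(1 <= d < M) d%:R ^- s * \sum_(M <= k < M + d) k%:R^-1.

Lemma Sq_gg s M : Sq (gg s) M.+1 = SS M.+1 1 s + ZZ (s + 1) M.+1 - EE s M.+1.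
Proof.
rewrite /Sq /gg exchange_big /=.
under eq_bigr => d _ do rewrite -mulr_sumr telescope.
rewrite /EE /SS /ZZ -big_split -sumrB /=.
apply: eq_big_nat => d /andP[d1 _].
rewrite big_nat_recr //= ipD expr1 mulrBr mulrDr mulr_sumr.
have -> : \sum_(1 <= i < d) d%:R ^- s * i%:R^-1 = \sum_(1 <= k < d) k%:R ^- 1 * d%:R ^- s :> R.
  by apply: eq_bigr => i _; rewrite expr1 mulrC.
ring.
Qed.

Lemma EE_ge0 s M : 0 <= EE s M.
Proof.
rewrite /EE big_nat_cond sumr_ge0 // => d _; rewrite mulr_ge0 ?ip_ge0 //.
by rewrite sumr_ge0 // => k _; rewrite invr_ge0.
Qed.

Lemma EE_le s M : (3 <= s)%N -> EE s M <= 4 * M.+1%:R^-1.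
Proof.
move=> s3; case: M => [|M]; first by rewrite /EE big_geq // mulr_ge0 // invr_ge0.
apply: (@le_trans _ _ (ZZ 2 M.+1 * M.+1%:R^-1)).
  rewrite /EE /ZZ mulr_suml; apply: ler_sum_nat => d /andP[d1 _].
  have hd : d%:R != 0 :> R by rewrite pnatr_eq0 -lt0n.
  apply: (@le_trans _ _ (d%:R ^- s * (d%:R * M.+1%:R^-1))).
    apply: ler_wpM2l; first exact: ip_ge0.
    apply: (@le_trans _ _ (\sum_(M.+1 <= k < M.+1 + d) M.+1%:R^-1)).
      apply: ler_sum_nat => k /andP[Mk _]; exact: ipinv_le.
    by rewrite sumr_const_nat addKn mulr_natl.
  have hs : s = (2 + (1 + (s - 3)))%N by rewrite addnA subnKC.
  rewrite {1}hs !ipD expr1.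
  set t := d%:R ^- (s - 3).
  have -> : d%:R ^- 2 * (d%:R^-1 * t) * (d%:R * M.+1%:R^-1) =
     d%:R ^- 2 * M.+1%:R^-1 * t :> R.
  by field; rewrite hd andbT addrC natr1 pnatr_eq0.
  rewrite -[X in _ <= X]mulr1 ler_wpM2l ?mulr_ge0 ?ip_ge0 ?invr_ge0 //.
  exact: ip_le1.
have h2 := ZZ_le2 M.+1 (leqnn 2).
have hM : M.+1%:R^-1 <= 2 * M.+2%:R^-1 :> R.
  rewrite -[2 * _]invrK invfM invrK lef_pV2 ?posrE ?ltr0n ?mulr_gt0 ?invr_gt0 //.
  rewrite mulrC ler_pdivrMr ?ltr0n // -natrM ler_nat; lia.
have h0 : 0 <= M.+1%:R^-1 :> R by rewrite invr_ge0.
move: h2 hM h0; set x := M.+1%:R^-1; set y := M.+2%:R^-1; set z := ZZ 2 M.+1 => h2 hM h0.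
nra.
Qed.

Lemma EE_cvg s : (3 <= s)%N -> EE s @ \oo --> 0.
Proof.
move=> s3; apply: (@squeeze_cvgr _ _ _ _ (fun _ => 0) (fun M => 4 * harmonic M)).
- by near=> M; rewrite EE_ge0 EE_le.
- exact: cvg_cst.
- by rewrite -(mulr0 4); apply: cvgMr; exact: cvg_harmonic.
Unshelve. all: by end_near.
Qed.

Lemma D_cvg s : (3 <= s)%N ->
  (fun N => TT N 1 s - SS N s 1) @ \oo --> zeta2 R 1 s + zeta R (s + 1).
Proof.
move=> s3.
have g0 : forall k d, (1 <= k)%N -> (1 <= d)%N -> 0 <= gg s k d.
  move=> k d k1 d1; rewrite /gg mulr_ge0 ?ip_ge0 // subr_ge0.
  by apply: ipinv_le => //; rewrite leq_addr.
have e : (fun N => TT N 1 s - SS N s 1) = Tri (gg s).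
  by apply: funext => N; rewrite -SSp_SS D_is_Tri.
rewrite e; apply: Tri_lim => //.
rewrite -cvg_shiftS.
have e2 : [sequence Sq (gg s) n.+1]_n = (fun n => SS n.+1 1 s + ZZ (s + 1) n.+1 - EE s n.+1).
  by apply: funext => n; rewrite /= Sq_gg.
rewrite e2.
have -> : zeta2 R 1 s + zeta R (s + 1) = zeta2 R 1 s + zeta R (s + 1) - 0 by rewrite subr0.
apply: cvgB; first apply: cvgD.
- rewrite (cvg_shiftS (fun n => SS n 1 s)); apply: SS_cvg => //; exact: ltnW.
- by rewrite (cvg_shiftS (fun n => ZZ (s + 1) n)); apply: ZZ_cvg; rewrite addn1 ltnW // ltnW.
- by rewrite (cvg_shiftS (EE s)); exact: EE_cvg.
Qed.

Lemma cvg_sumn k (f : nat -> nat -> R) (L : nat -> R) :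
  (forall i, (i < k)%N -> f i @ \oo --> L i) ->
  (fun N => \sum_(i < k) f i N) @ \oo --> \sum_(i < k) L i.
Proof.
elim: k => [|k IH] hf.
  have -> : (fun N => \sum_(i < 0) f i N) = fun _ => 0 by apply: funext => N; rewrite big_ord0.
  by rewrite big_ord0; exact: cvg_cst.
have -> : (fun N => \sum_(i < k.+1) f i N) = fun N => \sum_(i < k) f i N + f k N.
  by apply: funext => N; rewrite big_ord_recr.
rewrite big_ord_recr /=; apply: cvgD; first by apply: IH => i ik; apply: hf; exact: ltnW.
exact: hf.
Qed.

Lemma R2 p q : (1 <= p)%N -> (1 <= q)%N ->
  zeta2 R p.+1 q.+1 =
  \sum_(i < p) ((-1) ^+ i * ('C(q.+1 + i - 1, i))%:R) *
     (zeta2 R (q.+1 + i) (p.+1 - i) + zeta2 R (p.+1 - i) (q.+1 + i) + zeta R (p.+1 + q.+1))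
  + (-1) ^+ p * ('C(p + q, p))%:R * (zeta2 R 1 (p + q.+1) + zeta R (p.+1 + q.+1))
  + (-1) ^+ p.+1 * \sum_(j < q) ('C(p.+1 + j - 1, j))%:R * zeta2 R (p.+1 + j) (q.+1 - j).
Proof.
move=> p1 q1.
have hL : (fun N => SS N p.+1 q.+1) @ \oo --> zeta2 R p.+1 q.+1.
  apply: SS_cvg; lia.
have e : (fun N => SS N p.+1 q.+1) = fun N =>
  \sum_(i < p) ((-1) ^+ i * ('C(q.+1 + i - 1, i))%:R) * TT N (p.+1 - i) (q.+1 + i)
  + (-1) ^+ p * ('C(p + q, p))%:R * (TT N 1 (p + q.+1) - SS N (p + q.+1) 1)
  + (-1) ^+ p.+1 * \sum_(j < q) ('C(p.+1 + j - 1, j))%:R * SS N (p.+1 + j) (q.+1 - j).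
  apply: funext => N; rewrite sum_id // big_ord_recr /= [in X in _ + _ * X]big_ord_recr /=.
  have -> : 'C(q.+1 + p - 1, p) = 'C(p + q, p) by rewrite addSn subn1 /= addnC.
  have -> : 'C((p.+1 + q - 1), q) = 'C(p + q, p).
    by rewrite addSn subn1 /= -bin_sub ?leq_addl // addnK.
  have -> : (q.+1 + p = p + q.+1)%N by lia.
  have -> : (p.+1 + q = p + q.+1)%N by lia.
  rewrite !subSnn !SSp_SS.
  have -> : \sum_(i < q) 'C(p.+1 + i - 1, i)%:R * SSp N (p.+1 + i) (q.+1 - i) =
     \sum_(j < q) 'C(p.+1 + j - 1, j)%:R * SS N (p.+1 + j) (q.+1 - j) :> R.
    by apply: eq_bigr => j _; rewrite SSp_SS.
  rewrite exprS; ring.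
have hR : (fun N => SS N p.+1 q.+1) @ \oo --> 
  \sum_(i < p) ((-1) ^+ i * ('C(q.+1 + i - 1, i))%:R) *
     (zeta2 R (q.+1 + i) (p.+1 - i) + zeta2 R (p.+1 - i) (q.+1 + i) + zeta R (p.+1 + q.+1))
  + (-1) ^+ p * ('C(p + q, p))%:R * (zeta2 R 1 (p + q.+1) + zeta R (p.+1 + q.+1))
  + (-1) ^+ p.+1 * \sum_(j < q) ('C(p.+1 + j - 1, j))%:R * zeta2 R (p.+1 + j) (q.+1 - j).
  rewrite e; apply: cvgD; first apply: cvgD.
  - apply: (cvg_sumn (f := fun i N => (-1) ^+ i * ('C(q.+1 + i - 1, i))%:R * TT N (p.+1 - i) (q.+1 + i))
      (L := fun i => (-1) ^+ i * ('C(q.+1 + i - 1, i))%:R *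
     (zeta2 R (q.+1 + i) (p.+1 - i) + zeta2 R (p.+1 - i) (q.+1 + i) + zeta R (p.+1 + q.+1)))).
    move=> i ip; apply: cvgMr.
    have -> : (p.+1 + q.+1 = (p.+1 - i) + (q.+1 + i))%N by lia.
    rewrite (addrC (zeta2 R (q.+1 + i) _)) -prod_zeta; [|lia|lia].
    apply: TT_cvg; lia.
  - apply: cvgMr; have -> : (p.+1 + q.+1 = (p + q.+1) + 1)%N by lia.
    apply: D_cvg; lia.
  - apply: cvgMr.
    apply: (cvg_sumn (f := fun j N => ('C(p.+1 + j - 1, j))%:R * SS N (p.+1 + j) (q.+1 - j))
       (L := fun j => ('C(p.+1 + j - 1, j))%:R * zeta2 R (p.+1 + j) (q.+1 - j))).
    move=> j jq; apply: cvgMr; apply: SS_cvg; lia.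
exact: (cvg_unique _ hL hR).
Qed.

Lemma cst_lim0 (a : R) : (fun _ : nat => a) @ \oo --> 0 -> a = 0.
Proof. by move=> h; exact: (cvg_unique _ (cvg_cst a) h). Qed.

Lemma poly3_zero (q : {poly R}) (c g : R) : c != 0 -> (size q <= 3)%N ->
  (fun j : nat => q.[j%:R * c + g]) @ \oo --> 0 -> q = 0.
Proof.
move=> c0 sq h.
have E j : q.[j%:R * c + g] = q`_0 + q`_1 * (j%:R * c + g) + q`_2 * (j%:R * c + g) ^+ 2.
  by rewrite (horner_coef_wide _ sq) !big_ord_recr big_ord0 /= add0r expr0 expr1 mulr1.
have h1 : (fun j : nat => q.[j.+1%:R * c + g]) @ \oo --> 0.
  by rewrite (cvg_shiftS (fun j : nat => q.[j%:R * c + g])).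
have h2 : (fun j : nat => q.[j.+2%:R * c + g]) @ \oo --> 0.
  by rewrite (cvg_shiftS (fun j : nat => q.[j.+1%:R * c + g])).
have q2 : q`_2 = 0.
  have hh : (fun j : nat => q.[j.+2%:R * c + g] - 2 * q.[j.+1%:R * c + g] + q.[j%:R * c + g]) @ \oo --> 0.
    rewrite -[0](addr0 0) -{1}[0](subr0 0) -{2}(mulr0 2).
    by apply: cvgD; first apply: cvgB; [exact: h2 | apply: cvgMr; exact: h1 | exact: h].
  have e : (fun j : nat => q.[j.+2%:R * c + g] - 2 * q.[j.+1%:R * c + g] + q.[j%:R * c + g]) =
     fun _ => 2 * q`_2 * c ^+ 2.
    by apply: funext => j; rewrite !E -!natr1; ring.
  rewrite e in hh; move/cst_lim0: hh => /eqP.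
  by rewrite -mulrA mulf_eq0 pnatr_eq0 /= mulf_eq0 expf_eq0 (negbTE c0) andbF orbF => /eqP.

have q1 : q`_1 = 0.
  have hh : (fun j : nat => q.[j.+1%:R * c + g] - q.[j%:R * c + g]) @ \oo --> 0.
    by rewrite -[0](subr0 0); apply: cvgB.
  have e : (fun j : nat => q.[j.+1%:R * c + g] - q.[j%:R * c + g]) = fun _ => q`_1 * c.
    by apply: funext => j; rewrite !E q2 -!natr1; ring.
  rewrite e in hh; move/cst_lim0: hh => /eqP.
  by rewrite mulf_eq0 (negbTE c0) orbF => /eqP.
have q0 : q`_0 = 0.
  have e : (fun j : nat => q.[j%:R * c + g]) = fun _ => q`_0.
    by apply: funext => j; rewrite E q1 q2 !mul0r !addr0.
  by rewrite e in h; exact: cst_lim0.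
apply/polyP => i; rewrite coef0.
case: i => [|[|[|i]]] //; apply: nth_default; exact: leq_trans sq _.
Qed.

Lemma pow2_cvg : (fun j => 2 ^ j)%N @ \oo --> \oo.
Proof.
move=> P [N _ NP]; exists N => // j /= Nj; apply: NP => /=.
apply: leq_trans Nj _; exact: ltnW (ltn_expl _ _).
Qed.

Lemma ln_poly_zero (r : {poly R}) g : (size r <= 3)%N ->
  (fun N : nat => r.[ln (N%:R) + g]) @ \oo --> 0 -> r = 0.
Proof.
move=> sr h; apply: (@poly3_zero r (ln 2) g) => //.
  by rewrite gt_eqF // ln_gt0 // ltr1n.
have := cvg_comp _ _ pow2_cvg h.
have -> : ((fun N : nat => r.[ln (N%:R) + g]) \o (fun j => 2 ^ j)%N) =
  (fun j : nat => r.[j%:R * ln 2 + g]).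
  by apply: funext => j /=; rewrite natrX lnXn // mulr_natl.
by [].
Qed.

Lemma size_le3_sub (p q : {poly R}) : (size p <= 3)%N -> (size q <= 3)%N -> (size (p - q)%R <= 3)%N.
Proof.
move=> sp sq; apply: leq_trans (size_add _ _) _; rewrite size_opp.
by rewrite geq_max sp sq.
Qed.

Lemma st_reg a b : (2 <= a)%N -> (2 <= b)%N -> zeta_st R a b = (zeta2 R a b)%:P.
Proof.
move=> a2 b2.
have hS : (fun N => SS N a b) @ \oo --> zeta2 R a b by apply: SS_cvg; lia.
rewrite /zeta_st; apply: xget_unique.
  split; first by apply: leq_trans (size_polyC_leq1 _) _.
  have -> : (fun N : nat => \sum_(1 <= k2 < N) \sum_(1 <= k1 < k2)
                     (k1%:R ^- a * k2%:R ^- b : R)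
                  - (zeta2 R a b)%:P.[ln (N%:R) + (euler_gamma R)]) =
            (fun N => SS N a b - zeta2 R a b).
    by apply: funext => N; rewrite hornerC.
  exact/subr_cvg0.
move=> y [sy hy].
have : y - (zeta2 R a b)%:P = 0.
  apply: (@ln_poly_zero _ (euler_gamma R)); first by apply: size_le3_sub => //; apply: leq_trans (size_polyC_leq1 _) _.
  have e : (fun N : nat => (y - (zeta2 R a b)%:P).[ln N%:R + (euler_gamma R)]) =
    (fun N => (SS N a b - zeta2 R a b) - (SS N a b - y.[ln N%:R + (euler_gamma R)])).
    by apply: funext => N; rewrite hornerD hornerN hornerC; ring.
  rewrite e -[0](subr0 0); apply: cvgB; first exact/subr_cvg0.
  exact: hy.
by move/eqP; rewrite subr_eq0 => /eqP.
Qed.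

Lemma bern (e : R) i : 0 <= e -> e <= 1 -> 1 - i%:R * e <= (1 - e) ^+ i.
Proof.
move=> e0 e1; elim: i => [|i IH]; first by rewrite mul0r subr0 expr0.
rewrite exprS -natr1.
have h : 0 <= 1 - e by rewrite subr_ge0.
have h2 : 0 <= i%:R :> R by [].
set x := (1 - e) ^+ i in IH *; nra.
Qed.

Lemma term_tail (j : nat) : (1 <= j)%N -> j.+1%:R ^- 2 <= j%:R^-1 - j.+1%:R^-1 :> R.
Proof.
move=> j1.
have e : j%:R^-1 - j.+1%:R^-1 = (j%:R * j.+1%:R)^-1 :> R.
  rewrite -natr1; field.
  by apply/andP; split; rewrite ?natr1 pnatr_eq0 // -lt0n.
rewrite e -exprVn expr2 -invfM lef_pV2 ?posrE ?mulr_gt0 ?ltr0n //.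
by rewrite ler_pM2r ?ltr0n // ler_nat.
Qed.

Lemma tail2 K N : (1 <= K)%N -> \sum_(K.+1 <= i < N) i%:R ^- 2 <= K%:R^-1 :> R.
Proof.
move=> K1; case: (leqP N K.+1) => NK.
  by rewrite big_geq // invr_ge0.
apply: (@le_trans _ _ (\sum_(K.+1 <= i < N) ((fun k : nat => - (k.-1%:R^-1 : R)) i.+1 - (fun k : nat => - (k.-1%:R^-1 : R)) i))).
  apply: ler_sum_nat => i /andP[Ki _] /=.
  case: i Ki => [//|i] Ki /=; rewrite opprK addrC.
  by apply: term_tail; apply: leq_trans K1 _.
rewrite telescope_sumr ?(ltnW NK) //= opprK addrC lerBlDr lerDl invr_ge0 //.
Qed.

Definition PP (eps : R) (k N : nat) := \sum_(1 <= i < N) ((1 - eps) ^+ i / i%:R ^+ k).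

Lemma PP_cvg eps k : (2 <= k)%N -> 0 < eps < 1 -> PP eps k @ \oo --> limn (PP eps k).
Proof.
move=> k2 /andP[e0 e1].
have t0 i : 0 <= (1 - eps) ^+ i / i%:R ^+ k by rewrite mulr_ge0 // exprn_ge0 // subr_ge0 ltW.
apply: (@mono_cvg _ 2) => N.
  by apply: sum_mono_range.
apply: le_trans (ZZ_le2 N k2); apply: ler_sum_nat => i _.
rewrite -[X in _ <= X]mul1r ler_wpM2r ?ip_ge0 //; apply: exprn_ile1; lra.
Qed.

Lemma abel_bound eps k K : (2 <= k)%N -> 0 < eps < 1 -> (1 <= K)%N ->
  `|limn (PP eps k) - zeta R k| <= K%:R * eps + K%:R^-1.
Proof.
move=> k2 ee K1; have /andP[e0 e1] := ee.
have hQ : (fun N => ZZ k N - PP eps k N) @ \oo --> zeta R k - limn (PP eps k).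
  by apply: cvgB; [exact: ZZ_cvg | exact: PP_cvg].
have Qe N : ZZ k N - PP eps k N = \sum_(1 <= i < N) (1 - (1 - eps) ^+ i) * i%:R ^- k.
  by rewrite /ZZ /PP -sumrB; apply: eq_bigr => i _; rewrite mulrBl mul1r.
have u0 i : 0 <= (1 - (1 - eps) ^+ i) * i%:R ^- k.
  rewrite mulr_ge0 ?ip_ge0 // subr_ge0; apply: exprn_ile1; lra.
have Q0 N : 0 <= ZZ k N - PP eps k N by rewrite Qe big_nat_cond sumr_ge0.
have QB N : ZZ k N - PP eps k N <= K%:R * eps + K%:R^-1.
  rewrite Qe; apply: le_trans (sum_mono_range (fun i _ => u0 i) (leq_addl K.+1 N)) _.
  rewrite (big_cat_nat (n := K.+1)) //=; last by lia.
  apply: lerD.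
    apply: (@le_trans _ _ (\sum_(1 <= i < K.+1) eps)).
      apply: ler_sum_nat => i /andP[i1 _].
      apply: (@le_trans _ _ (i%:R * eps * i%:R ^- 1)).
        apply: ler_pM; rewrite ?ip_ge0 //.
        + by rewrite subr_ge0; apply: exprn_ile1; lra.
        + have := @bern eps i (ltW e0) (ltW e1); lra.
        + by apply: ip_le; lia.
      rewrite expr1 mulrAC divff ?mul1r // pnatr_eq0 -lt0n //.
    by rewrite sumr_const_nat subn1 /= mulr_natl.
  apply: le_trans (tail2 (K.+1 + N)%N K1).
  apply: ler_sum_nat => i /andP[Ki _].
  apply: (@le_trans _ _ (i%:R ^- k)).
    rewrite -[X in _ <= X]mul1r ler_wpM2r ?ip_ge0 //.
    have : 0 <= (1 - eps) ^+ i by apply: exprn_ge0; lra.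
    lra.
  by apply: ip_le => //; apply: leq_trans Ki.
have L0 : 0 <= zeta R k - limn (PP eps k) by apply: (cvgr_to_ge hQ); near=> N; exact: Q0.
have L1 : zeta R k - limn (PP eps k) <= K%:R * eps + K%:R^-1.
  by apply: (cvgr_to_le hQ); near=> N; exact: QB.
by rewrite distrC ger0_norm.
Unshelve. all: by end_near.
Qed.

Lemma abel k : (2 <= k)%N -> (fun eps : R => limn (PP eps k) - zeta R k) @ 0^'+ --> 0.
Proof.
move=> k2; apply/cvgrPdist_le => e e0.
set K := (Num.bound (2 / e)).+1.
have K1 : (1 <= K)%N by [].
have hK : K%:R^-1 <= e / 2.
  have h1 : 2 / e < K%:R.
    apply: lt_le_trans (archi_boundP _) _; first by rewrite divr_ge0 // ltW.
    by rewrite ler_nat.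
  rewrite -[e / 2]invf_div lef_pV2 ?posrE ?divr_gt0 ?ltr0n //; exact: ltW.
have Kp : 0 < K%:R :> R by rewrite ltr0n.
near=> eps.
have ep : 0 < eps by near: eps; exact: nbhs_right_gt.
have e1 : eps < 1 by near: eps; exact: nbhs_right_lt.
have e2 : eps <= e / 2 / K%:R.
  by near: eps; apply: nbhs_right_le; rewrite !divr_gt0.
have ee : 0 < eps < 1 by rewrite ep e1.
rewrite sub0r normrN; apply: le_trans (abel_bound k2 ee K1) _.
have : K%:R * eps <= e / 2.
  by rewrite -ler_pdivlMl // mulrC.
lra.
Unshelve. all: by end_near.
Qed.

Lemma sh_reg k : (2 <= k)%N -> zeta_sh R k = (zeta R k)%:P.
Proof.
move=> k2; rewrite /zeta_sh; apply: xget_unique.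
  split; first by apply: leq_trans (size_polyC_leq1 _) _.
  have -> : (fun eps : R => limn (fun N => \sum_(1 <= k0 < N) ((1 - eps) ^+ k0 / k0%:R ^+ k))
                  - (zeta R k)%:P.[- ln eps]) = (fun eps : R => limn (PP eps k) - zeta R k).
    by apply: funext => eps; rewrite hornerC.
  exact: abel.
move=> y [sy hy].
set r := y - (zeta R k)%:P.
have hr : (fun eps : R => r.[- ln eps]) @ 0^'+ --> 0.
  have e : (fun eps : R => r.[- ln eps]) = (fun eps => (limn (PP eps k) - zeta R k)
        - (limn (fun N => \sum_(1 <= k0 < N) ((1 - eps) ^+ k0 / k0%:R ^+ k)) - y.[- ln eps])).
    by apply: funext => eps; rewrite /r hornerD hornerN hornerC /PP; ring.
  have h := cvgB (abel k2) hy; rewrite subr0 in h; rewrite e; exact: h.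
have := (cvg_at_rightP (fun eps : R => r.[- ln eps]) 0 0).1 hr (fun n => n.+1%:R^-1).
move=> /(_ (conj (fun n => harmonic_gt0 n) cvg_harmonic)) h2.
have e3 : (fun n : nat => r.[- ln (n.+1%:R^-1 : R)]) = (fun n => r.[ln n.+1%:R + 0]).
  by apply: funext => n; rewrite lnV ?opprK ?addr0 // posrE ltr0n.
rewrite e3 in h2.
have h3 : (fun N : nat => r.[ln N%:R + 0]) @ \oo --> 0.
  by rewrite -(cvg_shiftS (fun N : nat => r.[ln N%:R + 0])).
have r0 : r = 0.
  apply: ln_poly_zero h3; apply: size_le3_sub; first exact: leq_trans sy _.
  exact: leq_trans (size_polyC_leq1 _) _.
by move/eqP: r0; rewrite subr_eq0 => /eqP.
Qed.
End An.

Section Fin.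
Variable R : realType.
Local Open Scope classical_set_scope.

Lemma polyC_sumn k (F : nat -> R) : \sum_(i < k) (F i)%:P = (\sum_(i < k) F i)%:P.
Proof.
elim: k => [|k IH]; first by rewrite !big_ord0.
by rewrite !big_ord_recr /= IH polyCD.
Qed.

Lemma part2 p q : (1 <= p)%N -> (1 <= q)%N ->
  (zeta2 R p.+1 q.+1)%:P =
     \sum_(0 <= i < p.+1) ((-1) ^+ i * ('C(q.+1 + i - 1, i))%:R) *:
        (zeta_st R (q.+1 + i) (p.+1 - i) + (zeta2 R (p.+1 - i) (q.+1 + i))%:P + (zeta R (p.+1 + q.+1))%:P)
     + (-1) ^+ p.+1 *: \sum_(0 <= j < q.+1) ('C(p.+1 + j - 1, j))%:R *: zeta_st R (p.+1 + j) (q.+1 - j).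
Proof.
move=> p1 q1.
rewrite !big_mkord big_ord_recr [X in _ + _ *: X]big_ord_recr /=.
have e1 : \sum_(i < p) ((-1) ^+ i * ('C(q.+1 + i - 1, i))%:R) *:
        (zeta_st R (q.+1 + i) (p.+1 - i) + (zeta2 R (p.+1 - i) (q.+1 + i))%:P + (zeta R (p.+1 + q.+1))%:P)
   = (\sum_(i < p) ((-1) ^+ i * ('C(q.+1 + i - 1, i))%:R) *
     (zeta2 R (q.+1 + i) (p.+1 - i) + zeta2 R (p.+1 - i) (q.+1 + i) + zeta R (p.+1 + q.+1)))%:P.
  rewrite rmorph_sum; apply: eq_bigr => i _.
  by rewrite st_reg; [rewrite -!polyCD scale_polyC | lia | have := ltn_ord i; lia].
have e2 : \sum_(j < q) ('C(p.+1 + j - 1, j))%:R *: zeta_st R (p.+1 + j) (q.+1 - j)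
   = (\sum_(j < q) ('C(p.+1 + j - 1, j))%:R * zeta2 R (p.+1 + j) (q.+1 - j))%:P.
  rewrite rmorph_sum; apply: eq_bigr => j _.
  by rewrite st_reg; [rewrite scale_polyC | lia | have := ltn_ord j; lia].
rewrite e1 e2.
have -> : 'C(q.+1 + p - 1, p) = 'C(p + q, p) by rewrite addSn subn1 /= addnC.
have -> : 'C((p.+1 + q - 1), q) = 'C(p + q, p).
  by rewrite addSn subn1 /= -bin_sub ?leq_addl // addnK.
have -> : (q.+1 + p = p + q.+1)%N by lia.
have -> : (p.+1 + q = p + q.+1)%N by lia.
rewrite !subSnn (@R2 R p q p1 q1).
set Z := zeta_st R (p + q.+1) 1.
set A := \sum_(i < p) _.
set B := \sum_(j < q) _.
set c := 'C(p + q, p)%:R.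
rewrite !scalerDr scalerA !scale_polyC.
have -> : (-1) ^+ p.+1 * c = - ((-1) ^+ p * c) by rewrite exprS; ring.
rewrite scaleNr mulrDr !polyCD.
set W := (_ *: Z).
ring.
Qed.

Lemma Pmn_eval p q : (1 <= p)%N -> (1 <= q)%N -> Pmn R p.+1 q.+1 = (zeta2 R p.+1 q.+1)%:P.
Proof.
move=> p1 q1; rewrite /Pmn !big_mkord big_ord_recr [X in _ + _ *: X]big_ord_recr /=.
have e1 : \sum_(i < p) (((-1) ^+ i * ('C(q.+1 + i - 1, i))%:R * zeta R (q.+1 + i)) *: zeta_sh R (p.+1 - i))
   = (\sum_(i < p) ((-1) ^+ i * ('C(q.+1 + i - 1, i))%:R) *
     (zeta2 R (q.+1 + i) (p.+1 - i) + zeta2 R (p.+1 - i) (q.+1 + i) + zeta R (p.+1 + q.+1)))%:P.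
  rewrite rmorph_sum; apply: eq_bigr => i _.
  have hi := ltn_ord i.
  rewrite sh_reg; last by lia.
  rewrite scale_polyC -(mulrA _ (zeta R (q.+1 + i))) prod_zeta; [|lia|lia].
  by have -> : (q.+1 + i + (p.+1 - i) = p.+1 + q.+1)%N by lia.
have e2 : \sum_(j < q) ('C(p.+1 + j - 1, j))%:R *: (zeta R (p.+1 + j) *: zeta_sh R (q.+1 - j)
      - (zetastar R (q.+1 - j) (p.+1 + j))%:P)
   = (\sum_(j < q) ('C(p.+1 + j - 1, j))%:R * zeta2 R (p.+1 + j) (q.+1 - j))%:P.
  rewrite rmorph_sum; apply: eq_bigr => j _.
  have hj := ltn_ord j.
  rewrite sh_reg; last by lia.
  rewrite scale_polyC -polyCB scale_polyC /zetastar prod_zeta; [|lia|lia].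
  by congr (_ * _)%:P; ring.
rewrite e1 e2.
have -> : 'C(q.+1 + p - 1, p) = 'C(p + q, p) by rewrite addSn subn1 /= addnC.
have -> : 'C((p.+1 + q - 1), q) = 'C(p + q, p).
  by rewrite addSn subn1 /= -bin_sub ?leq_addl // addnK.
have -> : (q.+1 + p = p + q.+1)%N by lia.
have -> : (p.+1 + q = p + q.+1)%N by lia.
rewrite !subSnn (@R2 R p q p1 q1).
set Z := zeta_sh R 1.
set A := \sum_(i < p) _.
set B := \sum_(j < q) _.
set c := 'C(p + q, p)%:R.
rewrite /zetastar.
have -> : (p + q.+1 + 1 = p.+1 + q.+1)%N by lia.
rewrite !scalerDr !scalerN !scalerA !scale_polyC.
have -> : (-1) ^+ p.+1 * (c * zeta R (p + q.+1)) = - ((-1) ^+ p * c * zeta R (p + q.+1)).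
  by rewrite exprS; ring.
rewrite scaleNr.
set W := (_ *: Z).
rewrite !exprS !polyCD ?polyCN !polyCM ?polyCN ?polyC1.
ring.
Qed.

Lemma part1 p q : (1 <= p)%N -> (1 <= q)%N ->
  (zeta R p.+1 * zeta R q.+1 - zeta R (p.+1 + q.+1))%:P = Pmn R p.+1 q.+1 + Pmn R q.+1 p.+1.
Proof.
move=> p1 q1; rewrite !Pmn_eval // prod_zeta; try lia.
by rewrite -polyCD; congr (_%:P); ring.
Qed.
End Fin.

End Helpers.
Import Helpers.

Theorem theorem2p4 (R : realType) (m n : nat) (hm : (1 < m)%N) (hn : (1 < n)%N) :
  ((zeta R m * zeta R n - zeta R (m + n))%:P = Pmn R m n + Pmn R n m)
  /\
  ((zeta2 R m n)%:P =
     \sum_(0 <= i < m) ((-1) ^+ i * ('C(n + i - 1, i))%:R) *: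
        (zeta_st R (n + i) (m - i) + (zeta2 R (m - i) (n + i))%:P + (zeta R (m + n))%:P)
     + (-1) ^+ m *: \sum_(0 <= j < n) ('C(m + j - 1, j))%:R *: zeta_st R (m + j) (n - j)).
Proof.
case: m hm => [//|p] hp; case: n hn => [//|q] hq.
split; [exact: part1 | exact: part2].
Qed.
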